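(* Let $f$ be the linear Anosov diffeomorphism of $\mathbb{T}^2=\mathbb{R}^2/\mathbb{Z}^2$ induced by $L=\begin{pmatrix}a&b\\c&d\end{pmatrix}$ with $a,b,c,d\in\mathbb{Z}$ and $ad-bc=1$ (and $L$ has no eigenvalue on the unit circle). Then: (i) $b$ divides $a-d$ if and only if $f$ is $R$-reversible for $R$ the involution of $\mathbb{T}^2$ induced by a matrix of the form $\begin{pmatrix}1&0\\ \gamma&-1\end{pmatrix}$ with $\gamma\in\mathbb{Z}$ (necessarily $\gamma=\frac{d-a}{b}$), and likewise if and only if $f$ is $R$-reversible for $R$ induced by a matrix $\begin{pmatrix}-1&0\\ \gamma&1\end{pmatrix}$ with $\gamma\in\mathbb{Z}$ (necessarily $\gamma=\frac{a-d}{b}$). (ii) $c$ divides $a-d$ if and only if $f$ is $R$-reversible for $R$ induced by a matrix of the form $\begin{pmatrix}1&\gamma\\ 0&-1\end{pmatrix}$ with $\gamma\in\mathbb{Z}$ (necessarily $\gamma=\frac{d-a}{c}$), and likewise if and only if $f$ is $R$-reversible for $R$ induced by a matrix $\begin{pmatrix}-1&\gamma\\ 0&1\end{pmatrix}$ with $\gamma\in\mathbb{Z}$ (necessarily $\gamma=\frac{a-d}{c}$). (iii) Given $\alpha,\beta\in\mathbb{Z}\setminus\{0\}$ with $1-\alpha^2\neq0$ and $\beta$ dividing $1-\alpha^2$, let $R$ be the involution of $\mathbb{T}^2$ induced by $A=\begin{pmatrix}\alpha&\beta\\ \frac{1-\alpha^2}{\beta}&-\alpha\end{pmatrix}$. Then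 $f$ is $R$-reversible if and only if $(x,y)=(2b\alpha+(d-a)\beta,\ \beta)$ is a solution of the generalized Pell equation $x^2-Dy^2=N$, where $D=(a+d)^2-4$ and $N=4b^2$.
   Context: A diffeomorphism of $\mathbb{T}^2$ is induced by an integer matrix $M$ with $\det M=\pm1$ if it is the map $\pi(v)\mapsto\pi(Mv)$, where $\pi:\mathbb{R}^2\to\mathbb{R}^2/\mathbb{Z}^2$ is the projection. A linear Anosov diffeomorphism is one induced by such a matrix with no eigenvalue of modulus one. For an involution $R$ ($R\circ R=\mathrm{Id}$), $f$ is $R$-reversible if $R\circ f=f^{-1}\circ R$. *)

(* Defs.v *)
From Stdlib Require Import Reals ZArith Lra.
From Coquelicot Require Import Coquelicot.
Open Scope R_scope.

Record zmat2 := Zmat2 { m11 : Z; m12 : Z; m21 : Z; m22 : Z }.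

Definition zdet (M : zmat2) : Z := (m11 M * m22 M - m12 M * m21 M)%Z.

Definition mapR2 (M : zmat2) (p : R * R) : R * R :=
  (IZR (m11 M) * fst p + IZR (m12 M) * snd p,
   IZR (m21 M) * fst p + IZR (m22 M) * snd p).

(** The torus R^2/Z^2, represented by the fundamental domain [0,1)^2. *)
Definition T2 : Type := { p : R * R | (0 <= fst p < 1) /\ (0 <= snd p < 1) }.

Lemma frac_part_range (x : R) : 0 <= frac_part x < 1.
Proof. destruct (base_fp x); split; lra. Qed.

Definition piT (v : R * R) : T2 :=
  exist _ (frac_part (fst v), frac_part (snd v))
        (conj (frac_part_range (fst v)) (frac_part_range (snd v))).

Definition induced (M : zmat2) : T2 -> T2 :=
  fun x => piT (mapR2 M (proj1_sig x)).

Definition eigenvalue (M : zmat2) (l : C) : Prop :=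
  exists v1 v2 : C, (v1 <> 0%C \/ v2 <> 0%C) /\
    Cplus (Cmult (RtoC (IZR (m11 M))) v1) (Cmult (RtoC (IZR (m12 M))) v2) = Cmult l v1 /\
    Cplus (Cmult (RtoC (IZR (m21 M))) v1) (Cmult (RtoC (IZR (m22 M))) v2) = Cmult l v2.

Definition linear_anosov_matrix (M : zmat2) : Prop :=
  (zdet M = 1%Z \/ zdet M = (-1)%Z) /\ forall l : C, eigenvalue M l -> Cmod l <> 1.

Definition involution {X : Type} (Rm : X -> X) : Prop := forall x, Rm (Rm x) = x.

Definition reversible {X : Type} (Rm f : X -> X) : Prop :=
  involution Rm /\
  exists g : X -> X,
    (forall x, g (f x) = x) /\ (forall x, f (g x) = x) /\
    (forall x, Rm (f x) = g (Rm x)).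

(* Main.v *)
Require Import Defs.
From Stdlib Require Import Reals ZArith.
From Coquelicot Require Import Coquelicot.
From Stdlib Require Import Lra Lia Psatz ProofIrrelevance.

Open Scope R_scope.

Definition zint (x : R) : Prop := exists n : Z, x = IZR n.

Lemma fp_unique (x y : R) (n : Z) : 0 <= y < 1 -> x = y + IZR n -> frac_part x = y.
Proof.
  intros Hy Hx. destruct (Int_part_frac_part_spec x n y Hy) as [_ H]; [lra|]. auto.
Qed.

Lemma T2_eq (x y : T2) : proj1_sig x = proj1_sig y -> x = y.
Proof.
  destruct x as [x px], y as [y py]; simpl; intros E; subst. f_equal; apply proof_irrelevance.
Qed.

Lemma piT_proj (x : T2) : piT (proj1_sig x) = x.
Proof.
  apply T2_eq. destruct x as [[x1 x2] [h1 h2]]; simpl.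
  f_equal; apply (fp_unique _ _ 0); auto; simpl; lra.
Qed.

Lemma piT_int (v w : R * R) (n1 n2 : Z) :
  fst v = fst w + IZR n1 -> snd v = snd w + IZR n2 -> piT v = piT w.
Proof.
  intros E1 E2. apply T2_eq; simpl. f_equal.
  - apply (fp_unique _ _ (Int_part (fst w) + n1)). apply frac_part_range.
    rewrite E1, plus_IZR. unfold frac_part. ring.
  - apply (fp_unique _ _ (Int_part (snd w) + n2)). apply frac_part_range.
    rewrite E2, plus_IZR. unfold frac_part. ring.
Qed.

Lemma piT_eq_int (v w : R * R) : piT v = piT w -> zint (fst v - fst w) /\ zint (snd v - snd w).
Proof.
  intros E. assert (E1 := f_equal (fun z => fst (proj1_sig z)) E).
  assert (E2 := f_equal (fun z => snd (proj1_sig z)) E). simpl in E1, E2.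
  unfold frac_part in E1, E2. split.
  - exists (Int_part (fst v) - Int_part (fst w))%Z. rewrite minus_IZR. lra.
  - exists (Int_part (snd v) - Int_part (snd w))%Z. rewrite minus_IZR. lra.
Qed.

Definition zmul (M N : zmat2) : zmat2 :=
  Zmat2 (m11 M * m11 N + m12 M * m21 N)%Z (m11 M * m12 N + m12 M * m22 N)%Z
        (m21 M * m11 N + m22 M * m21 N)%Z (m21 M * m12 N + m22 M * m22 N)%Z.
Definition zid := Zmat2 1 0 0 1.

Lemma zmul_assoc M N P : zmul (zmul M N) P = zmul M (zmul N P).
Proof. destruct M, N, P; unfold zmul; cbn -[Z.mul Z.add Z.sub Z.opp]; f_equal; ring. Qed.
Lemma zmul_id_l M : zmul zid M = M.
Proof. destruct M; unfold zmul; cbn -[Z.mul Z.add Z.sub Z.opp]; f_equal; ring. Qed.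
Lemma zmul_id_r M : zmul M zid = M.
Proof. destruct M; unfold zmul; cbn -[Z.mul Z.add Z.sub Z.opp]; f_equal; ring. Qed.
Lemma zdet_mul M N : zdet (zmul M N) = (zdet M * zdet N)%Z.
Proof. destruct M, N; unfold zdet, zmul; cbn -[Z.mul Z.add Z.sub Z.opp]; ring. Qed.

Lemma induced_piT M v : induced M (piT v) = piT (mapR2 M v).
Proof.
  unfold induced. cbn -[Z.mul Z.add Z.sub Z.opp]. destruct v as [v1 v2]. cbn -[Z.mul Z.add Z.sub Z.opp].
  apply (piT_int _ _ (- (m11 M * Int_part v1 + m12 M * Int_part v2))
                     (- (m21 M * Int_part v1 + m22 M * Int_part v2))); cbn -[Z.mul Z.add Z.sub Z.opp];
  unfold frac_part; rewrite !opp_IZR, !plus_IZR, !mult_IZR; ring.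
Qed.

Lemma induced_comp M N x : induced M (induced N x) = induced (zmul M N) x.
Proof.
  unfold induced at 2. rewrite induced_piT. unfold induced. f_equal.
  destruct (proj1_sig x) as [v1 v2]. unfold mapR2, zmul; cbn -[Z.mul Z.add Z.sub Z.opp].
  rewrite !plus_IZR, !mult_IZR. f_equal; ring.
Qed.

Lemma induced_id x : induced zid x = x.
Proof.
  unfold induced. rewrite <- (piT_proj x) at 2. f_equal.
  destruct (proj1_sig x) as [v1 v2]. unfold mapR2; cbn -[Z.mul Z.add Z.sub Z.opp]. f_equal; ring.
Qed.

Lemma zero_int (k : Z) : (forall t, zint (IZR k * t)) -> k = 0%Z.
Proof.
  intros H. destruct (Z.eq_dec k 0) as [|Hk]; auto.
  destruct (H (/ (2 * IZR k))) as [n Hn].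
  assert (IZR k <> 0) by (apply not_0_IZR; auto).
  assert (Hn' : 1 = IZR (2 * n)) by (rewrite mult_IZR, <- Hn; field; auto).
  apply eq_IZR in Hn'. lia.
Qed.

Lemma induced_inj M N : (forall x, induced M x = induced N x) -> M = N.
Proof.
  intros H.
  assert (H1 : forall t, zint (IZR (m11 M - m11 N) * t) /\ zint (IZR (m21 M - m21 N) * t)).
  { intros t. specialize (H (piT (t, 0))). rewrite !induced_piT in H.
    apply piT_eq_int in H. cbn -[Z.mul Z.add Z.sub Z.opp] in H. rewrite !minus_IZR.
    destruct H as [[n1 E1] [n2 E2]]. split; [exists n1|exists n2]; lra. }
  assert (H2 : forall t, zint (IZR (m12 M - m12 N) * t) /\ zint (IZR (m22 M - m22 N) * t)).
  { intros t. specialize (H (piT (0, t))). rewrite !induced_piT in H.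
    apply piT_eq_int in H. cbn -[Z.mul Z.add Z.sub Z.opp] in H. rewrite !minus_IZR.
    destruct H as [[n1 E1] [n2 E2]]. split; [exists n1|exists n2]; lra. }
  assert (A1 := zero_int _ (fun t => proj1 (H1 t))).
  assert (A2 := zero_int _ (fun t => proj2 (H1 t))).
  assert (A3 := zero_int _ (fun t => proj1 (H2 t))).
  assert (A4 := zero_int _ (fun t => proj2 (H2 t))).
  destruct M, N; cbn -[Z.mul Z.add Z.sub Z.opp] in *; f_equal; lia.
Qed.

Lemma rev_iff A L Li :
  zmul A A = zid -> zmul L Li = zid -> zmul Li L = zid ->
  (reversible (induced A) (induced L) <-> zmul (zmul A L) (zmul A L) = zid).
Proof.
  intros HAA HLLi HLiL. split.
  - intros [_ [g [h1 [h2 h3]]]].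
    assert (E : zmul L (zmul A L) = A).
    { apply induced_inj. intros x. rewrite <- !induced_comp. rewrite h3, h2. reflexivity. }
    rewrite zmul_assoc, E. exact HAA.
  - intros H. split.
    + intros x. rewrite induced_comp, HAA. apply induced_id.
    + exists (induced Li). split; [|split].
      * intros x. rewrite induced_comp, HLiL. apply induced_id.
      * intros x. rewrite induced_comp, HLLi. apply induced_id.
      * intros x. rewrite !induced_comp. f_equal.
        rewrite <- (zmul_id_r (zmul Li A)), <- H, !zmul_assoc.
        rewrite <- (zmul_assoc A A), HAA, zmul_id_l, <- (zmul_assoc Li L), HLiL, zmul_id_l.
        reflexivity.
Qed.

Lemma sq_id_iff M : zdet M = (-1)%Z -> (zmul M M = zid <-> (m11 M + m22 M = 0)%Z).
Proof.
  destruct M as [p q r s]; unfold zdet, zmul, zid; cbn -[Z.mul Z.add Z.sub Z.opp]. intros Hd. split.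
  - intros H. injection H. intros E4 E3 E2 E1.
    destruct (Z.eq_dec (p + s) 0) as [|Hn]; auto. exfalso.
    assert (q = 0)%Z.
    { assert (q * (p + s) = 0)%Z by lia. apply Z.mul_eq_0 in H0. lia. }
    subst q. assert (p * (p + s) = 0)%Z by nia. apply Z.mul_eq_0 in H0.
    destruct H0; [subst; lia | lia].
  - intros H. assert (s = -p)%Z by lia. subst s. f_equal; nia.
Qed.

Lemma case_lemma (A : zmat2) a b c d :
  (a * d - b * c)%Z = 1%Z -> zmul A A = zid -> zdet A = (-1)%Z ->
  (reversible (induced A) (induced (Zmat2 a b c d)) <->
   (m11 (zmul A (Zmat2 a b c d)) + m22 (zmul A (Zmat2 a b c d)) = 0)%Z).
Proof.
  intros Hdet HAA HdA.
  rewrite (rev_iff A (Zmat2 a b c d) (Zmat2 d (-b) (-c) a) HAA).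
  - apply sq_id_iff. rewrite zdet_mul, HdA. unfold zdet; cbn -[Z.mul Z.add Z.sub Z.opp]. lia.
  - unfold zmul, zid; cbn -[Z.mul Z.add Z.sub Z.opp]; f_equal; lia.
  - unfold zmul, zid; cbn -[Z.mul Z.add Z.sub Z.opp]; f_equal; lia.
Qed.

Lemma b_nonzero a b c d :
  (a * d - b * c)%Z = 1%Z -> linear_anosov_matrix (Zmat2 a b c d) -> b <> 0%Z.
Proof.
  intros Hdet [_ Han] Hb. subst b.
  assert (Ha : (a = 1 \/ a = -1)%Z) by (apply (Z.eq_mul_1 a d); lia).
  assert (Hd : d = a) by (destruct Ha; subst; lia). subst d.
  apply (Han (RtoC (IZR a))).
  - exists (RtoC 0), (RtoC 1). split.
    + right. intros E. injection E. lra.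
    + cbn -[Z.mul Z.add Z.sub Z.opp]. split; apply injective_projections; cbn -[Z.mul Z.add Z.sub Z.opp]; ring.
  - rewrite Cmod_R. destruct Ha; subst.
    + apply Rabs_R1.
    + unfold Rabs; destruct Rcase_abs; lra.
Qed.

Theorem theoremA (a b c d : Z)
  (hdet : (a * d - b * c)%Z = 1%Z)
  (hanosov : linear_anosov_matrix (Zmat2 a b c d)) :
  let f := induced (Zmat2 a b c d) in
  (* (i) *)
  (((b | a - d)%Z <->
      exists g : Z, reversible (induced (Zmat2 1 0 g (-1))) f) /\
   (forall g : Z, reversible (induced (Zmat2 1 0 g (-1))) f -> (g * b = d - a)%Z) /\
   ((b | a - d)%Z <->
      exists g : Z, reversible (induced (Zmat2 (-1) 0 g 1)) f) /\
   (forall g : Z, reversible (induced (Zmat2 (-1) 0 g 1)) f -> (g * b = a - d)%Z)) /\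
  (* (ii) *)
  (((c | a - d)%Z <->
      exists g : Z, reversible (induced (Zmat2 1 g 0 (-1))) f) /\
   (forall g : Z, reversible (induced (Zmat2 1 g 0 (-1))) f -> (g * c = d - a)%Z) /\
   ((c | a - d)%Z <->
      exists g : Z, reversible (induced (Zmat2 (-1) g 0 1)) f) /\
   (forall g : Z, reversible (induced (Zmat2 (-1) g 0 1)) f -> (g * c = a - d)%Z)) /\
  (* (iii) *)
  (forall alpha beta : Z,
     alpha <> 0%Z -> beta <> 0%Z -> (1 - alpha ^ 2)%Z <> 0%Z ->
     (beta | 1 - alpha ^ 2)%Z ->
     (reversible
        (induced (Zmat2 alpha beta ((1 - alpha ^ 2) / beta) (- alpha))) f <->
      let x := (2 * b * alpha + (d - a) * beta)%Z in
      let y := beta in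
      let D := ((a + d) ^ 2 - 4)%Z in
      let N := (4 * b ^ 2)%Z in
      (x ^ 2 - D * y ^ 2 = N)%Z)).
Proof.
  intros f. unfold f.
  assert (C1 : forall g, reversible (induced (Zmat2 1 0 g (-1))) (induced (Zmat2 a b c d))
                          <-> (g * b = d - a)%Z).
  { intros g. rewrite (case_lemma _ a b c d hdet);
    [cbn -[Z.mul Z.add Z.sub Z.opp]; lia | unfold zmul, zid; cbn -[Z.mul Z.add Z.sub Z.opp]; f_equal; lia
      | unfold zdet; cbn -[Z.mul Z.add Z.sub Z.opp]; lia]. }
  assert (C2 : forall g, reversible (induced (Zmat2 (-1) 0 g 1)) (induced (Zmat2 a b c d))
                          <-> (g * b = a - d)%Z).
  { intros g. rewrite (case_lemma _ a b c d hdet);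
    [cbn -[Z.mul Z.add Z.sub Z.opp]; lia | unfold zmul, zid; cbn -[Z.mul Z.add Z.sub Z.opp]; f_equal; lia
      | unfold zdet; cbn -[Z.mul Z.add Z.sub Z.opp]; lia]. }
  assert (C3 : forall g, reversible (induced (Zmat2 1 g 0 (-1))) (induced (Zmat2 a b c d))
                          <-> (g * c = d - a)%Z).
  { intros g. rewrite (case_lemma _ a b c d hdet);
    [cbn -[Z.mul Z.add Z.sub Z.opp]; lia | unfold zmul, zid; cbn -[Z.mul Z.add Z.sub Z.opp]; f_equal; lia
      | unfold zdet; cbn -[Z.mul Z.add Z.sub Z.opp]; lia]. }
  assert (C4 : forall g, reversible (induced (Zmat2 (-1) g 0 1)) (induced (Zmat2 a b c d))
                          <-> (g * c = a - d)%Z).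
  { intros g. rewrite (case_lemma _ a b c d hdet);
    [cbn -[Z.mul Z.add Z.sub Z.opp]; lia | unfold zmul, zid; cbn -[Z.mul Z.add Z.sub Z.opp]; f_equal; lia
      | unfold zdet; cbn -[Z.mul Z.add Z.sub Z.opp]; lia]. }
  split; [|split].
  - split; [|split; [|split]].
    + split.
      * intros [k Hk]. exists (-k)%Z. apply C1. lia.
      * intros [g Hg]. apply C1 in Hg. exists (-g)%Z. lia.
    + intros g Hg. apply C1 in Hg. exact Hg.
    + split.
      * intros [k Hk]. exists k. apply C2. lia.
      * intros [g Hg]. apply C2 in Hg. exists g. lia.
    + intros g Hg. apply C2 in Hg. exact Hg.
  - split; [|split; [|split]].
    + split.
      * intros [k Hk]. exists (-k)%Z. apply C3. lia.
      * intros [g Hg]. apply C3 in Hg. exists (-g)%Z. lia.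
    + intros g Hg. apply C3 in Hg. exact Hg.
    + split.
      * intros [k Hk]. exists k. apply C4. lia.
      * intros [g Hg]. apply C4 in Hg. exists g. lia.
    + intros g Hg. apply C4 in Hg. exact Hg.
  - intros al be Hal Hbe H1 [k Hk]. cbv zeta.
    assert (Hb := b_nonzero a b c d hdet hanosov).
    rewrite Hk, Z.div_mul by exact Hbe.
    rewrite (case_lemma _ a b c d hdet).
    + cbn -[Z.mul Z.add Z.sub Z.opp].
      assert (Id : ((2 * b * al + (d - a) * be) ^ 2 - ((a + d) ^ 2 - 4) * be ^ 2 - 4 * b ^ 2
                 = -4 * b * be * (al * a + be * c + (k * a - al * c) * 0 + (k * b - al * d) + 0)
                   - 4 * be ^ 2 * (a * d - b * c - 1) + 4 * b ^ 2 * (k * be - (1 - al ^ 2)))%Z)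
        by ring.
      rewrite hdet, Hk in Id.
      split.
      * intros Ht. assert (E : (al * a + be * c + (k * a - al * c) * 0 + (k * b - al * d) + 0 = 0)%Z) by lia.
        rewrite E in Id. lia.
      * intros HP. assert (E : (b * be * (al * a + be * c + (k * a - al * c) * 0 + (k * b - al * d) + 0) = 0)%Z) by lia.
        apply Z.mul_eq_0 in E. destruct E as [E|E]; [apply Z.mul_eq_0 in E; lia|lia].
    + unfold zmul, zid; cbn -[Z.mul Z.add Z.sub Z.opp]. f_equal; nia.
    + unfold zdet; cbn -[Z.mul Z.add Z.sub Z.opp]. nia.
Qed.
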